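(* Let $T^r$ be a rooted binary phylogenetic tree on taxon set $X$ with $n=|X|$, whose edges $e$ carry real edge lengths $\lambda_e$. If $T^r$ is ultrametric, then the rankings of the taxa induced by the original Shapley Value $SV_{T^r}$ and by the modified Shapley Value $\widetilde{SV}_{T^r}$ are identical; that is, for all $a,b\in X$, $$SV_{T^r}(a)\ge SV_{T^r}(b)\iff \widetilde{SV}_{T^r}(a)\ge \widetilde{SV}_{T^r}(b).$$
   Context: A rooted binary phylogenetic tree on $X$ is a tree whose leaves are bijectively labelled by $X$, in which every internal vertex has degree 3 except a distinguished root vertex $\rho$ of degree 2. It is ultrametric if the path length (sum of edge lengths) from every leaf to the root is the same. For $S\subseteq X$, the rooted phylogenetic diversity $PD^r(S)$ is the sum of the edge lengths of the smallest subtree of $T^r$ containing all leaves in $S$ and the root (with $PD^r(\emptyset)=0$). The original Shapley Value of $a\in X$ is $$SV_{T^r}(a)=\frac{1}{n!}\sum_{S\subseteq X,\ a\in S}(|S|-1)!\,(n-|S|)!\,\bigl(PD^r(S)-PD^r(S\setminus\{a\})\bigr),$$ and the modified Shapley Value is the same sum restricted to subsets with $|S|\ge 2$: $$\widetilde{SV}_{T^r}(a)=\frac{1}{n!}\sum_{S\subseteq X,\ a\in S,\ |S|\ge 2}(|S|-1)!\,(n-|S|)!\,\bigl(PD^r(S)-PD^r(S\setminus\{a\})\bigr).$$ A function $f:X\to\mathbb{R}$ induces the ranking ordering the taxa in decreasing order of $f$ (taxon $x$ is placed before $y$ precisely if $f(x)\ge f(y)$). *)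

(* Defs.v *)
From HB Require Import structures.
From mathcomp Require Import all_boot all_order all_algebra.
From mathcomp Require Import reals.
Set Implicit Arguments. Unset Strict Implicit. Unset Printing Implicit Defensive.
Import Order.TTheory GRing.Theory Num.Theory.
Local Open Scope ring_scope.

(* A rooted tree on the finite vertex type V is encoded by its root and a
   parent function: parent root = root, and every vertex reaches the root by
   iterating parent.  The edges are the pairs (parent v, v) for v <> root;
   the edge (parent v, v) is identified with its lower endpoint v. *)
Section Tree.
Variables (V : finType) (root : V) (parent : V -> V).

Definition is_rooted_tree : Prop :=
  parent root = root /\ forall v : V, exists k : nat, iter k parent v = root.

Definition children (v : V) : {set V} :=
  [set u | (u != root) && (parent u == v)].

Definition anc (u v : V) : bool :=
  [exists k : 'I_#|V|.+1, iter k parent v == u].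

Definition is_leaf (v : V) : bool := (v != root) && (#|children v| == 0%N).

(* binary: the root has degree 2 (two children); every other vertex has
   degree 1 (leaf) or degree 3 (one parent, two children). *)
Definition is_binary : Prop :=
  #|children root| = 2%N /\
  forall v, v != root -> #|children v| = 0%N \/ #|children v| = 2%N.

Definition leaf_labelling (X : finType) (phi : X -> V) : Prop :=
  injective phi /\ forall v, is_leaf v <-> exists x, phi x = v.

Definition rooted_binary_phylo_tree (X : finType) (phi : X -> V) : Prop :=
  is_rooted_tree /\ is_binary /\ leaf_labelling phi.

Variable R : realType.
Variable lambda : V -> R. (* lambda v = length of the edge (parent v, v) *)

Definition root_dist (v : V) : R :=
  \sum_(u | (u != root) && anc u v) lambda u.

Definition ultrametric (X : finType) (phi : X -> V) : Prop :=
  forall x y : X, root_dist (phi x) = root_dist (phi y).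

(* rooted phylogenetic diversity: total length of the edges of the smallest
   subtree containing the root and the leaves labelled by S; an edge
   (parent u, u) belongs to it iff u is an ancestor of some leaf of S. *)
Definition PDr (X : finType) (phi : X -> V) (S : {set X}) : R :=
  \sum_(u | (u != root) && [exists x in S, anc u (phi x)]) lambda u.

Definition shapley (X : finType) (phi : X -> V) (a : X) : R :=
  (#|X|`!%:R)^-1 *
  \sum_(S : {set X} | a \in S)
     ((#|S|.-1)`!%:R * (#|X| - #|S|)`!%:R * (PDr phi S - PDr phi (S :\ a))).

Definition mod_shapley (X : finType) (phi : X -> V) (a : X) : R :=
  (#|X|`!%:R)^-1 *
  \sum_(S : {set X} | (a \in S) && (2 <= #|S|)%N)
     ((#|S|.-1)`!%:R * (#|X| - #|S|)`!%:R * (PDr phi S - PDr phi (S :\ a))).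

End Tree.

(* Main.v *)
Require Import Defs.
From HB Require Import structures.
From mathcomp Require Import all_boot all_order all_algebra.
From mathcomp Require Import reals.
Import Order.TTheory GRing.Theory Num.Theory.
Local Open Scope ring_scope.

Lemma single_pred (X : finType) (a : X) (S : {set X}) :
  ((a \in S) && ~~ (2 <= #|S|)%N) = (S == [set a]).
Proof.
apply/idP/idP.
- case/andP=> aS; rewrite -ltnNge ltnS => hS.
  rewrite eq_sym eqEcard cards1 hS andbT sub1set //.
- by move/eqP->; rewrite set11 cards1.
Qed.

Lemma shapley_split (R : realType) (V X : finType) (root : V)
  (parent : V -> V) (phi : X -> V) (lambda : V -> R) (a : X) :
  shapley root parent lambda phi a = mod_shapley root parent lambda phi a +
  (#|X|`!%:R)^-1 * ((#|X| - 1)`!%:R * root_dist root parent lambda (phi a)).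
Proof.
rewrite /shapley /mod_shapley -mulrDr; congr (_ * _).
rewrite (bigID (fun S : {set X} => (2 <= #|S|)%N)) /=; congr (_ + _).
rewrite (big_pred1 [set a]); last by move=> S; rewrite /= single_pred.
rewrite cards1 /= mul1r; congr (_ * _).
have -> : PDr root parent lambda phi ([set a] :\ a) = 0.
  rewrite setDv /PDr big1 // => u /andP [_ /existsP [x]]; by rewrite in_set0.
rewrite subr0 /PDr /root_dist; apply: eq_bigl => u; congr (_ && _).
apply/existsP/idP => [[x /andP [/set1P -> //]]|h]; exists a; by rewrite set11.
Qed.

Theorem proposition1 (R : realType) (V X : finType) (root : V)
  (parent : V -> V) (phi : X -> V) (lambda : V -> R) :
  rooted_binary_phylo_tree root parent phi ->
  ultrametric root parent lambda phi ->
  forall a b : X,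
    (shapley root parent lambda phi a >= shapley root parent lambda phi b) <->
    (mod_shapley root parent lambda phi a >= mod_shapley root parent lambda phi b).
Proof.
move=> _ hu a b; rewrite !shapley_split (hu a b) lerD2r; by [].
Qed.
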